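(* Let $\lambda$ be a partition, $A=\mathcal{L}(\lambda)$, and let $i,j\ge1$ be integers with $\lambda[i,j]\neq()$. (1) If $\mathbb{SG}(A[i,j])=0$, then $d(\lambda[i,j])\ge1$ and $\mathbb{SG}(A[i-1,j-1])=0$. (2) If $\mathbb{SG}(A[i,j])=1$ and $d(\lambda[i,j])\ge2$, then $\mathbb{SG}(A[i-1,j-1])=1$. (3) If $\mathbb{SG}(A[i,j])=2$ and $d(\lambda[i,j])\ge3$, then $\mathbb{SG}(A[i-1,j-1])=2$.
   Context: A partition is a finite non-increasing sequence $\lambda=(\lambda_1,\dots,\lambda_r)$ of positive integers; $()$ is the empty partition. Durfee length: $d(\lambda)=\max\{k:\lambda_k\ge k\}$, and $d(())=0$. For non-negative $i,j$, $\lambda[i,j]$ is $(\lambda_{i+1}-j,\dots,\lambda_r-j)$ with all non-positive entries removed. LCTR: positions $\mathcal{L}(\mu)$; if $\mu\neq()$ the two moves go to $\mathcal{L}(\mu[1,0])$ and $\mathcal{L}(\mu[0,1])$; $\mathcal{L}(())$ is terminal. For $A=\mathcal{L}(\lambda)$, $A[i,j]=\mathcal{L}(\lambda[i,j])$. Normal play; $\mathbb{SG}(A)=\operatorname{mex}\{\mathbb{SG}(B):A\to B\}$. *)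

(* Defs.v *)
From mathcomp Require Import all_boot.
Set Implicit Arguments. Unset Strict Implicit. Unset Printing Implicit Defensive.

Definition is_partition (lam : seq nat) : bool :=
  all (fun x => 0 < x) lam && sorted geq lam.

(* lam[i,j] = (lam_{i+1} - j, ..., lam_r - j) with non-positive entries removed. *)
Definition shift (lam : seq nat) (i j : nat) : seq nat :=
  [seq x - j | x <- drop i lam & j < x].

(* Durfee length d(lam) = max {k : lam_k >= k} (1-indexed), d(()) = 0. *)
Definition durfee (lam : seq nat) : nat :=
  \max_(1 <= k < (size lam).+1 | k <= nth 0 lam k.-1) k.

Definition mex (s : seq nat) : nat :=
  find (fun k => k \notin s) (iota 0 (size s).+1).

(* Sprague-Grundy value of the LCTR position L(mu), computed with fuel;
   from L(mu), mu <> (), the moves go to L(mu[1,0]) and L(mu[0,1]);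
   L(()) is terminal. *)
Fixpoint sg_fuel (n : nat) (mu : seq nat) : nat :=
  match n with
  | 0 => 0
  | n'.+1 =>
      if mu is [::] then 0
      else mex [:: sg_fuel n' (shift mu 1 0); sg_fuel n' (shift mu 0 1)]
  end.

(* Each move strictly decreases sumn mu + size mu, so this fuel suffices. *)
Definition SG (mu : seq nat) : nat := sg_fuel (sumn mu + size mu).+1 mu.

(* Main.v *)
Require Import Defs.
From mathcomp Require Import all_boot zify.
Set Implicit Arguments. Unset Strict Implicit.

Lemma mex2E x y : mex [:: x; y] =
  if (x != 0) && (y != 0) then 0 else if (x != 1) && (y != 1) then 1 else 2.
Proof.
by case: x => [|[|[|x]]]; case: y => [|[|[|y]]]; rewrite /mex.
Qed.

Lemma filtmap (s : seq nat) b d :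
  [seq y - d | y <- [seq x - b | x <- s & b < x] & d < y] =
  [seq x - (b + d) | x <- s & b + d < x].
Proof.
elim: s => //= x s IH.
case: (ltnP b x) => hb /=.
  have -> : (d < x - b) = (b + d < x) by lia.
  by case: ifP => _; rewrite /= IH // subnDA.
have -> : (b + d < x) = false by lia.
by rewrite IH.
Qed.

Lemma shift_sorted lam a b : sorted geq lam -> sorted geq (shift lam a b).
Proof.
move=> hs; rewrite /shift.
apply: (homo_sorted (e := geq)); first by move=> x y /= h; lia.
apply: sorted_filter; first by move=> x y z /= ? ?; lia.
apply: (subseq_sorted (leT := geq)); first by move=> x y z /= ? ?; lia.
  exact: drop_subseq.
exact: hs.
Qed.

Lemma shift_pos lam a b : all (fun x => 0 < x) (shift lam a b).
Proof.
rewrite /shift all_map; apply/allP => x; rewrite mem_filter /= => /andP[h _]; lia.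
Qed.

Lemma comp01 lam a b : shift (shift lam a b) 0 1 = shift lam a b.+1.
Proof. by rewrite /shift drop0 filtmap addn1. Qed.

Lemma comp10 lam a b : sorted geq lam ->
  shift (shift lam a b) 1 0 = shift lam a.+1 b.
Proof.
move=> hs0.
have hs : sorted geq (drop a lam).
  apply: (subseq_sorted (leT := geq)); first by move=> x y z /= ? ?; lia.
    exact: drop_subseq.
  exact: hs0.
rewrite /shift.
have -> : drop a.+1 lam = drop 1 (drop a lam) by rewrite drop_drop.
move: (drop a lam) hs => [|x s] //= hs.
have hall : all (geq x) s.
  apply: (order_path_min (leT := geq)) hs => p q r /= ? ?; lia.
case: (ltnP b x) => hb /=.
  by rewrite drop0 filtmap addn0 drop0.
rewrite drop0.
have -> : [seq x0 <- s | b < x0] = [::].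
  rewrite (@eq_in_filter _ _ pred0) ?filter_pred0 //.
  move=> y hy /=; move/allP: hall => /(_ y hy) /= ?; lia.
by [].
Qed.

Definition meas (mu : seq nat) := sumn mu + size mu.

Lemma meas10 mu : mu != [::] -> meas (shift mu 1 0) < meas mu.
Proof.
case: mu => // x s _; rewrite /meas /shift /= drop0.
change nat in x; change (seq nat) in s.
suff : sumn [seq y - 0 | y <- s & 0 < y] + size [seq y - 0 | y <- s & 0 < y]
   <= sumn s + size s by lia.
elim: s => //= y s IH; case: ifP => /= _; lia.
Qed.

Lemma sum01 (t : seq nat) :
  sumn [seq y - 1 | y <- t & 1 < y] + size [seq y - 1 | y <- t & 1 < y] <= sumn t.
Proof. elim: t => //= y t IH; case: ifP => /= h; lia. Qed.

Lemma meas01 mu : mu != [::] -> meas (shift mu 0 1) < meas mu.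
Proof.
case: mu => // x s _; rewrite /meas /shift drop0.
have := sum01 (x :: s); rewrite [sumn (x :: s)]/= [size (x :: s)]/=; lia.
Qed.

Lemma fuelE n n' mu : meas mu < n -> meas mu < n' -> sg_fuel n mu = sg_fuel n' mu.
Proof.
elim: n n' mu => [|n IH] [|n'] mu //= h h'.
case: mu h h' => [|x s] //= h h'.
have ne : x :: s != [::] by [].
have h1 := meas10 ne; have h2 := meas01 ne.
by rewrite (IH n' (shift _ 1 0)) ?(IH n' (shift _ 0 1)) //; lia.
Qed.

Lemma sg_fuelS n mu : mu != [::] ->
  sg_fuel n.+1 mu = mex [:: sg_fuel n (shift mu 1 0); sg_fuel n (shift mu 0 1)].
Proof. by case: mu. Qed.

Lemma SG_rec mu : mu != [::] ->
  SG mu = mex [:: SG (shift mu 1 0); SG (shift mu 0 1)].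
Proof.
move=> ne; rewrite {1}/SG sg_fuelS //.
have h1 := meas10 ne; have h2 := meas01 ne.
rewrite /SG (@fuelE _ (sumn (shift mu 1 0) + size (shift mu 1 0)).+1 (shift mu 1 0)).
rewrite (@fuelE _ (sumn (shift mu 0 1) + size (shift mu 0 1)).+1 (shift mu 0 1)) //.
all: rewrite /meas in h1 h2 *; lia.
Qed.

Lemma durfee_lower p k : 1 <= k -> k <= size p -> k <= nth 0 p k.-1 -> k <= durfee p.
Proof.
move=> h1 h2 h3; rewrite /durfee.
apply: (@leq_bigmax_seq _ _ (fun k => k <= nth 0 p k.-1) (fun k => k) k) => //.
by rewrite mem_index_iota h1 ltnS.
Qed.

Lemma durfee_upper p k : sorted geq p -> 1 <= k -> k <= durfee p -> k <= nth 0 p k.-1.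
Proof.
move=> hs hk; apply: contraLR; rewrite -!ltnNge => h.
have hd : durfee p <= k.-1; last by lia.
apply/bigmax_leqP_seq => i; rewrite mem_index_iota => /andP[hi1 hi2] hi.
rewrite leqNgt; apply/negP => hki.
have hle : nth 0 p i.-1 <= nth 0 p k.-1.
  apply: (sorted_leq_nth (leT := geq)) => //.
  - by move=> x y z /= ? ?; lia.
  - by move=> x /=.
  - rewrite inE /=; lia.
  - rewrite inE /=; lia.
  - lia.
lia.
Qed.

Lemma nth_pos_size (q : seq nat) i : 0 < nth 0 q i -> i < size q.
Proof. move=> h; rewrite ltnNge; apply/negP => h2; move: h; by rewrite nth_default. Qed.

Lemma size_ne (q : seq nat) : 0 < size q -> q != [::].
Proof. by case: q. Qed.

Lemma ne10 (mu : seq nat) : 1 <= nth 0 mu 1 -> shift mu 1 0 != [::].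
Proof.
case: mu => [|x0 [|x1 r]] //= h; rewrite /shift /= ?drop0.
by case: ifP => //; lia.
Qed.

Lemma ne01 (mu : seq nat) : 2 <= nth 0 mu 0 -> shift mu 0 1 != [::].
Proof.
case: mu => [|x0 r] //= h; rewrite /shift /=.
by case: ifP => //; lia.
Qed.

Lemma nth_shift3 (mu : seq nat) : sorted geq mu -> 3 <= nth 0 mu 2 ->
  2 <= nth 0 (shift mu 1 0) 1 /\ 2 <= nth 0 (shift mu 0 1) 1.
Proof.
case: mu => [|x0 [|x1 [|x2 r]]] //= /andP[h01 /andP[h12 _]] h.
rewrite /shift /= ?drop0.
by split; do ! case: ifP => /= ?; lia.
Qed.

Lemma nth_shift2 (mu : seq nat) : sorted geq mu -> 2 <= nth 0 mu 1 -> 2 <= nth 0 mu 0.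
Proof. case: mu => [|x0 [|x1 r]] //= /andP[h01 _] h; lia. Qed.

Section Main.
Variable lam : seq nat.
Hypothesis hs : sorted geq lam.

Let g a b := SG (shift lam a b).
Let ne a b := shift lam a b != [::].

Lemma rec a b : ne a b -> g a b = mex [:: g a.+1 b; g a b.+1].
Proof. by move=> h; rewrite /g SG_rec // comp10 // comp01. Qed.

Lemma mono10 a b : ne a.+1 b -> ne a b.
Proof. by rewrite /ne -comp10 //; apply: contraNN => /eqP ->. Qed.

Lemma mono01 a b : ne a b.+1 -> ne a b.
Proof. by rewrite /ne -comp01; apply: contraNN => /eqP ->. Qed.

Lemma L1 a b : ne a.+1 b.+1 -> g a.+1 b.+1 = 0 -> g a b = 0.
Proof.
move=> n11 g0.
have n10 := mono01 n11; have n01 := mono10 n11; have n00 := mono01 n01.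
rewrite rec // (rec n10) (rec n01) g0 !mex2E.
by case: (g a.+2 b) => [|[|?]]; case: (g a b.+2) => [|[|?]].
Qed.

Lemma L2 a b : ne a.+1 b.+1 -> g a.+1 b.+1 = 1 ->
  2 <= durfee (shift lam a.+1 b.+1) -> g a b = 1.
Proof.
move=> n11 g1 hd.
have hmu := durfee_upper (shift_sorted a.+1 b.+1 hs) (isT : 0 < 2) hd.
rewrite /= in hmu.
have n21 : ne a.+2 b.+1 by rewrite /ne -comp10 //; apply: ne10; lia.
have n12 : ne a.+1 b.+2 by rewrite /ne -comp01; apply: ne01;
  apply: nth_shift2 => //; exact: shift_sorted.
have n10 := mono01 n11; have n01 := mono10 n11.
move: (g1); rewrite rec // mex2E.
case E1: (g a.+2 b.+1) => [|x1]; case E2: (g a.+1 b.+2) => [|x2] //= _.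
- rewrite rec ?(mono01 n01) // (L1 n21 E1) (rec n01) g1 !mex2E.
  by case: (g a b.+2) => [|[|?]].
- rewrite rec ?(mono01 n01) // (L1 n21 E1) (rec n01) g1 !mex2E.
  by case: (g a b.+2) => [|[|?]].
- rewrite rec ?(mono01 n01) // (L1 n12 E2) (rec n10) g1 !mex2E.
  by case: (g a.+2 b) => [|[|?]].
Qed.

Lemma L3 a b : ne a.+1 b.+1 -> g a.+1 b.+1 = 2 ->
  3 <= durfee (shift lam a.+1 b.+1) -> g a b = 2.
Proof.
move=> n11 g2 hd.
have hmu := durfee_upper (shift_sorted a.+1 b.+1 hs) (isT : 0 < 3) hd.
rewrite /= in hmu.
have [h10 h01] := nth_shift3 (shift_sorted a.+1 b.+1 hs) hmu.
rewrite comp10 // in h10; rewrite comp01 in h01.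
have n21 : ne a.+2 b.+1 by apply: size_ne; apply: ltnW; apply: nth_pos_size; lia.
have n12 : ne a.+1 b.+2 by apply: size_ne; apply: ltnW; apply: nth_pos_size; lia.
have d21 : 2 <= durfee (shift lam a.+2 b.+1).
  by apply: durfee_lower => //; apply: nth_pos_size; lia.
have d12 : 2 <= durfee (shift lam a.+1 b.+2).
  by apply: durfee_lower => //; apply: nth_pos_size; lia.
have n10 := mono01 n11; have n01 := mono10 n11; have n00 := mono01 n01.
move: (g2); rewrite rec // mex2E.
case E1: (g a.+2 b.+1) => [|[|x1]]; case E2: (g a.+1 b.+2) => [|[|x2]] //= _.
- by rewrite rec // (L1 n21 E1) (L2 n12 E2 d12).
- by rewrite rec // (L2 n21 E1 d21) (L1 n12 E2).
Qed.

End Main.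

Theorem mainTheorem10 (lam : seq nat) (i j : nat) :
  is_partition lam -> 1 <= i -> 1 <= j -> shift lam i j != [::] ->
  [/\ (SG (shift lam i j) = 0 ->
         1 <= durfee (shift lam i j) /\ SG (shift lam i.-1 j.-1) = 0),
      (SG (shift lam i j) = 1 -> 2 <= durfee (shift lam i j) ->
         SG (shift lam i.-1 j.-1) = 1)
    & (SG (shift lam i j) = 2 -> 3 <= durfee (shift lam i j) ->
         SG (shift lam i.-1 j.-1) = 2)].
Proof.
case/andP => _ hs; case: i => // a _; case: j => // b _ ne /=.
split.
- move=> h; split; last exact: (L1 hs ne h).
  apply: durfee_lower => //.
    by case: (shift lam a.+1 b.+1) ne.
  have := shift_pos lam a.+1 b.+1.
  by case: (shift lam a.+1 b.+1) ne => //= x s _ /andP[].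
- exact: L2.
- exact: L3.
Qed.
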